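(* Let $\Gamma$ be a semigroup with identity $e$, $V$ a finite-dimensional complex vector space, and $\rho:\Gamma\to\mathrm{End}(V)$ a reducible endomorphism action with $\rho(e)=\mathrm{Id}$ and generalized weights $\lambda_1,\dots,\lambda_k$. Then $\rho$ is expansive if and only if for each $i=1,\dots,k$ the image $\lambda_i(\Gamma)$ is an unbounded subset of $\mathbb C$.
   Context: A character of $\Gamma$ is a semigroup homomorphism $\lambda:\Gamma\to(\mathbb C,\cdot)$. An action $\rho:\Gamma\to\mathrm{End}(V)$ is reducible if there are characters $\lambda_1,\dots,\lambda_k$ and nontrivial $\rho(\Gamma)$-invariant subspaces $V_1,\dots,V_k$ with $V=V_1\oplus\cdots\oplus V_k$ such that for each $i$ there is a basis of $V_i$ with respect to which $\rho(\gamma)|_{V_i}-\lambda_i(\gamma)I$ is strictly upper triangular for all $\gamma\in\Gamma$; the $\lambda_i$ are the generalized weights. The action is expansive (on $V$ as an additive topological group) if there is a neighborhood $U$ of $0$ with $\bigcap_{\gamma}\rho(\gamma)^{-1}(U)=\{0\}$. *)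

(* Defs.v *)
From HB Require Import structures.
From mathcomp Require Import all_boot all_order all_algebra.
From mathcomp Require Import reals.
From mathcomp Require Import complex.
Set Implicit Arguments. Unset Strict Implicit. Unset Printing Implicit Defensive.
Import Order.TTheory GRing.Theory Num.Theory.
Local Open Scope ring_scope.

Definition is_monoid (G : Type) (op : G -> G -> G) (e : G) : Prop :=
  (forall a b c, op a (op b c) = op (op a b) c) /\
  (forall a, op e a = a) /\ (forall a, op a e = a).

Definition is_character (R : realType) (G : Type) (op : G -> G -> G)
  (lam : G -> R[i]) : Prop :=
  forall a b, lam (op a b) = lam a * lam b.

(* An endomorphism action of Gamma on V = C^n (column vectors, endomorphisms
   = n x n matrices acting on the left): a semigroup homomorphism
   Gamma -> (End V, composition). *)
Definition is_action (R : realType) (G : Type) (op : G -> G -> G) (n : nat)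
  (rho : G -> 'M[R[i]]_n) : Prop :=
  forall a b, rho (op a b) = rho a *m rho b.

Definition strictly_upper (F : Type) (F0 : F) (d : nat) (M : 'M[F]_d) : Prop :=
  forall r c : 'I_d, (c <= r)%N -> M r c = F0.

(* rho is reducible with generalized weights lam_0,...,lam_(k-1):
   there are nontrivial subspaces V_i (V_i = column span of B i, whose d i
   columns form a basis of V_i, d i > 0) with V = V_0 (+) ... (+) V_(k-1)
   (every vector is uniquely a sum of elements of the V_i), each V_i is
   rho(Gamma)-invariant and, in the basis given by the columns of B i, the
   matrix T of rho(gamma)|V_i (i.e. rho gamma *m B i = B i *m T) satisfies
   T - lam i gamma I strictly upper triangular; the lam i are characters. *)
Definition reducible_with (R : realType) (G : Type) (op : G -> G -> G)
  (n : nat) (rho : G -> 'M[R[i]]_n) (k : nat) (lam : 'I_k -> G -> R[i]) :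
  Prop :=
  (forall i, is_character op (lam i)) /\
  exists (d : 'I_k -> nat) (B : forall i, 'M[R[i]]_(n, d i)),
    (forall i, (0 < d i)%N) /\
    (forall v : 'cV[R[i]]_n,
        exists c : forall i, 'cV[R[i]]_(d i), v = \sum_i B i *m c i) /\
    (forall c : forall i, 'cV[R[i]]_(d i),
        \sum_i B i *m c i = 0 -> forall i, c i = 0) /\
    (forall i (g : G), exists T : 'M[R[i]]_(d i),
        rho g *m B i = B i *m T /\
        strictly_upper 0 (T - (lam i g)%:M)).

(* Neighborhoods of 0 in V = C^n for its standard (product / Euclidean)
   topology: sets containing some polydisc {v | forall j, |v_j| < eps}. *)
Definition nbhd0 (R : realType) (n : nat) (U : 'cV[R[i]]_n -> Prop) : Prop :=
  exists eps : R, 0 < eps /\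
    forall v : 'cV[R[i]]_n, (forall j, Normc.normc (v j 0) < eps) -> U v.

Definition expansive (R : realType) (G : Type) (n : nat)
  (rho : G -> 'M[R[i]]_n) : Prop :=
  exists U : 'cV[R[i]]_n -> Prop, nbhd0 U /\
    forall v : 'cV[R[i]]_n, (forall g : G, U (rho g *m v)) <-> v = 0.

Definition bounded_image (R : realType) (G : Type) (f : G -> R[i]) : Prop :=
  exists M : R, forall g : G, Normc.normc (f g) <= M.

(* Main.v *)
Require Import Defs.
From HB Require Import structures.
From mathcomp Require Import all_boot all_order all_algebra.
From mathcomp Require Import reals.
From mathcomp Require Import complex.
From mathcomp Require Import ring lra.
From Stdlib Require Import ClassicalEpsilon.
Import Order.TTheory GRing.Theory Num.Theory.
Local Open Scope ring_scope.
Local Open Scope complex_scope.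

Section Helpers.
Variable R : rcfType.

Lemma nc (x : R[i]) : `|x| = (Normc.normc x)%:C.
Proof. by case: x. Qed.

Lemma nc_ge0 (x : R[i]) : 0 <= Normc.normc x.
Proof. by case: x => a b; rewrite /Normc.normc sqrtr_ge0. Qed.

Lemma nc_real (a : R) : Normc.normc (a%:C) = `|a|.
Proof. by rewrite /Normc.normc /= expr0n /= addr0 sqrtr_sqr. Qed.

Lemma su_entry d (T : 'M[R[i]]_d) (l : R[i]) :
  strictly_upper 0 (T - l%:M) -> forall r c : 'I_d, (c <= r)%N ->
  T r c = l *+ (r == c).
Proof.
move=> H r c hcr; have := H r c hcr; rewrite !mxE => /eqP.
by rewrite subr_eq0 => /eqP.
Qed.

End Helpers.
Arguments nc {R}.
Arguments nc_ge0 {R}.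
Arguments nc_real {R}.
Arguments su_entry {R d T l}.

Theorem proposition2p3 (R : realType) (G : Type) (op : G -> G -> G) (e : G)
  (n : nat) (rho : G -> 'M[R[i]]_n) (k : nat) (lam : 'I_k -> G -> R[i]) :
  is_monoid op e ->
  is_action op rho ->
  rho e = 1%:M ->
  reducible_with op rho lam ->
  (expansive rho <-> forall i : 'I_k, ~ bounded_image (lam i)).
Proof.
move=> _ _ _ [_ [d [B [hd [hspan [hind hT]]]]]].
split.
- move=> [U [[eps [eps0 hU]] hexp]] i [M hM].
  pose j0 := Ordinal (hd i).
  pose e0 : 'cV[R[i]]_(d i) := delta_mx j0 0.
  pose w := B i *m e0.
  have wn0 : w != 0.
    apply/eqP => w0.
    pose c l : 'cV[R[i]]_(d l) := (l == i)%:R *: delta_mx (Ordinal (hd l)) 0.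
    have : \sum_l B l *m c l = 0.
      rewrite (bigD1 i) //= big1 ?addr0; last first.
        by move=> l /negbTE hl; rewrite /c hl scale0r mulmx0.
      by rewrite /c eqxx scale1r.
    move=> /hind /(_ i) /matrixP /(_ j0 0).
    by rewrite /c /= !mxE !eqxx /= => /eqP; rewrite mulr1 oner_eq0.
  have eig g : rho g *m w = lam i g *: w.
    have [T [hBT hsu]] := hT i g.
    rewrite /w mulmxA hBT -mulmxA scalemxAr; congr (_ *m _).
    apply/matrixP => r c; rewrite (ord1 c) !mxE.
    rewrite (bigD1 j0) //= big1 => [|j hj]; last first.
      by rewrite /e0 !mxE (negbTE hj) /= mulr0.
    rewrite /e0 !mxE !eqxx /= mulr1 addr0 (su_entry hsu) //.
    by case: (r == j0); rewrite ?mulr1n ?mulr0n ?mulr1 ?mulr0.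
  pose W := \sum_j Normc.normc (w j 0).
  have W0 : 0 <= W by apply: sumr_ge0 => j _; exact: nc_ge0.
  pose K := (`|M| + 1) * (W + 1).
  have K0 : 0 < K by have := normr_ge0 M; move=> ?; apply: mulr_gt0; lra.
  pose t := eps / K.
  have t0 : 0 < t by apply: divr_gt0.
  have := (hexp (t%:C *: w)).1.
  have -> : t%:C *: w = 0 <-> False.
    split=> // /eqP; rewrite scaler_eq0 (negbTE wn0) orbF.
    by rewrite -(rmorph0 (real_complex R)) (inj_eq (@complexI _)); lra.
  apply=> g; apply: hU => j.
  rewrite -scalemxAr eig scalerA mxE !Normc.normcM nc_real ger0_norm; last lra.
  have hl := hM g; have hl0 := nc_ge0 (lam i g).
  have hw0 := nc_ge0 (w j 0).
  have hwW : Normc.normc (w j 0) <= W.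
    rewrite /W (bigD1 j) //= lerDl; apply: sumr_ge0 => l _; exact: nc_ge0.
  have hab : Normc.normc (lam i g) * Normc.normc (w j 0) < K.
    have hM1 : M <= `|M| := ler_norm M.
    have hM2 : 0 <= `|M| := normr_ge0 M.
    rewrite /K; nra.
  by rewrite -mulrA /t mulrAC ltr_pdivrMr // ltr_pM2l.
- move=> hunb.
  exists (fun v => forall j, Normc.normc (v j 0) < 1); split.
    by exists 1; split=> // v; rewrite ltr01.
  move=> v; split; last first.
    by move=> -> g j; rewrite mulmx0 mxE Normc.normc0 ltr01.
  move=> hv; apply/eqP; apply: contraT => vn0.
  have [c hc] := hspan v.
  have [i ci] : exists i, c i != 0.
    case: (boolP [exists i, c i != 0]) => [/existsP //|/existsPn hall].
    case/negP: vn0; apply/eqP; rewrite hc big1 // => l _.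
    by have := hall l; rewrite negbK => /eqP ->; rewrite mulmx0.
  have [r0 cr0] : exists r, c i r 0 != 0.
    case: (boolP [exists r, c i r 0 != 0]) => [/existsP //|/existsPn hall].
    case/negP: ci; apply/eqP/matrixP => r cc; rewrite (ord1 cc) mxE.
    by apply/eqP; have := hall r; rewrite negbK.
  pose m := [arg max_(r > r0 | c i r 0 != 0) (r : nat)].
  have [cm hmax] : c i m 0 != 0 /\ forall r, c i r 0 != 0 -> (r <= m)%N.
    by rewrite /m; case: arg_maxnP => // x hx hxm; split=> // r hr; exact: hxm.
  have hzero (r : 'I_(d i)) : (m < r)%N -> c i r 0 = 0.
    move=> hr; apply/eqP; apply/negPn/negP => /hmax; rewrite leqNgt hr //.
  pose CC (j : 'I_n) := proj1_sig (constructive_indefinite_description _ (hspan (delta_mx j 0))).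
  have hCC j : delta_mx j 0 = \sum_l B l *m CC j l.
    exact: (proj2_sig (constructive_indefinite_description _ (hspan (delta_mx j 0)))).
  pose K := \sum_j Normc.normc (CC j i m 0).
  have ncm : 0 < Normc.normc (c i m 0).
    rewrite lt_def nc_ge0 andbT; apply/eqP => /Normc.eq0_normc /eqP.
    exact/negP.
  exfalso; apply: (hunb i); exists (K / Normc.normc (c i m 0)) => g.
  rewrite ler_pdivlMr //.
  have [TT hTT] : exists TT : forall l, 'M_(d l), forall l,
      rho g *m B l = B l *m TT l /\ strictly_upper 0 (TT l - (lam l g)%:M).
    exists (fun l => proj1_sig (constructive_indefinite_description _ (hT l g))) => l.
    exact: (proj2_sig (constructive_indefinite_description _ (hT l g))).
  pose w := rho g *m v.
  have hw j : Normc.normc (w j 0) < 1 := hv g j.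
  have dec1 : w = \sum_l B l *m (TT l *m c l).
    rewrite /w hc mulmx_sumr; apply: eq_bigr => l _.
    by rewrite mulmxA (hTT l).1 mulmxA.
  have dec2 : w = \sum_l B l *m (\sum_j w j 0 *: CC j l).
    rewrite {1}[w]matrix_sum_delta.
    transitivity (\sum_j w j 0 *: \sum_l B l *m CC j l).
      by apply: eq_bigr => j _; rewrite big_ord1 (hCC j).
    rewrite (eq_bigr (fun j => \sum_l w j 0 *: (B l *m CC j l))); last first.
      by move=> j _; rewrite scaler_sumr.
    rewrite exchange_big /=; apply: eq_bigr => l _.
    rewrite mulmx_sumr; apply: eq_bigr => j _; by rewrite scalemxAr.
  have eqc : TT i *m c i = \sum_j w j 0 *: CC j i.
    have H0 := hind (fun l => TT l *m c l - \sum_j w j 0 *: CC j l).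
    apply/eqP; rewrite -subr_eq0; apply/eqP; apply: H0.
    rewrite (eq_bigr (fun l => B l *m (TT l *m c l) - B l *m (\sum_j w j 0 *: CC j l))).
      by rewrite sumrB -dec1 -dec2 subrr.
    by move=> l _; rewrite mulmxBr.
  have lhs : (TT i *m c i) m 0 = lam i g * c i m 0.
    rewrite mxE (bigD1 m) //= big1 ?addr0 => [|r hr].
      by rewrite (su_entry (hTT i).2) // eqxx mulr1n.
    case: (ltngtP r m) => h.
    - by rewrite (su_entry (hTT i).2 _ _ (ltnW h)) eq_sym (negbTE hr) mulr0n mul0r.
    - by rewrite hzero // mulr0.
    - by move/val_inj: h => h; rewrite h eqxx in hr.
  have rhs : (\sum_j w j 0 *: CC j i) m 0 = \sum_j w j 0 * CC j i m 0.
    by rewrite summxE; apply: eq_bigr => j _; rewrite mxE.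
  rewrite -Normc.normcM -lecR -nc /K raddf_sum /=.
  rewrite -lhs eqc rhs.
  apply: le_trans (ler_norm_sum _ _ _) _.
  apply: ler_sum => j _; rewrite normrM nc; apply: ler_piMl.
    by rewrite normr_ge0.
  by have := hw j; rewrite -ltcR => /ltW.
Qed.
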